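(* (Fundamental theorem for partial comodules.) Let $k$ be a field, $H$ a $k$-coalgebra, $X=(X,X\bullet H,\pi_X,\rho_X)$ a quasi partial $H$-comodule and $x\in X$. Then there exists a finite-dimensional quasi partial subcomodule $Y\subseteq X$ with $x\in Y$. If moreover $X$ is lax (resp. geometric), then $Y$ is lax (resp. geometric) as well.
   Context: Work in the category of $k$-vector spaces. A partial comodule datum is $(X,X\bullet H,\pi_X,\rho_X)$ with $\pi_X:X\otimes H\to X\bullet H$ surjective linear and $\rho_X:X\to X\bullet H$ linear. Associated pushouts (in vector spaces): $X\bullet k$ (of $\pi_X$ and $X\otimes\epsilon:X\otimes H\to X\otimes k$, legs $X\bullet\epsilon$, $\pi_{X,\epsilon}$); $(X\bullet H)\bullet H$ (of $\pi_X$ and $\rho_X\otimes H:X\otimes H\to(X\bullet H)\otimes H$, legs $\rho_X\bullet H$, $\pi_{X\bullet H}$); $X\bullet(H\otimes H)$ (of $\pi_X$ and $X\otimes\Delta$, legs $X\bullet\Delta$, $\pi_{X,\Delta}$); $X\bullet(H\bullet H)$ (of $\pi_{X,\Delta}$ and $\pi_X\otimes H$, legs $\pi'_X:X\bullet(H\otimes H)\to X\bullet(H\bullet H)$, $\pi'_{X,\Delta}:(X\bullet H)\otimes H\to X\bullet(H\bullet H)$); $\Theta$ (of $\pi_{X\bullet H}$ and $\pi'_{X,\Delta}$, legs $\theta_1,\theta_2$). Quasi partial comodule: $\pi_{X,\epsilon}$ is an isomorphism and $(X\bullet\epsilon)\rho_X=\pi_{X,\epsilon}r_X$ with $r_X:X\cong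 X\otimes k$; and $\theta_1(\rho_X\bullet H)\rho_X=\theta_2\pi'_X(X\bullet\Delta)\rho_X$. Lax: there is a linear map $\theta_X:X\bullet(H\bullet H)\to(X\bullet H)\bullet H$ with $\theta_X\pi'_{X,\Delta}=\pi_{X\bullet H}$; geometric: $\theta_X$ is bijective. A morphism of partial comodule data $Y\to X$ is a pair $(f,f\bullet H)$ with $(f\bullet H)\rho_Y=\rho_Xf$, $(f\bullet H)\pi_Y=\pi_X(f\otimes H)$. A (quasi) partial subcomodule of $X$ is a (quasi) partial comodule $Y$ with a morphism $(f,f\bullet H):Y\to X$ such that $f$ and $f\bullet H$ are injective. *)

(* Defs.v *)
From HB Require Import structures.
From mathcomp Require Import all_boot all_order all_algebra.

Set Implicit Arguments.
Unset Strict Implicit.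
Unset Printing Implicit Defensive.

Import GRing.Theory.
Local Open Scope ring_scope.

Section PartialComodules.

Variable k : fieldType.

Definition lin (U V : lmodType k) (f : U -> V) : Prop :=
  forall (a : k) (u v : U), f (a *: u + v) = a *: f u + f v.

Definition bilin (U V W : lmodType k) (b : U -> V -> W) : Prop :=
  (forall v, lin (fun u => b u v)) /\ (forall u, lin (b u)).

Record tensor (U V : lmodType k) := Tensor {
  tcar : lmodType k;
  tmul : U -> V -> tcar;
  tlift : forall W : lmodType k, (U -> V -> W) -> tcar -> W;
  tmul_bilin : bilin tmul;
  tlift_lin : forall (W : lmodType k) (b : U -> V -> W), bilin b -> lin (tlift b);
  tlift_tmul : forall (W : lmodType k) (b : U -> V -> W), bilin b ->
    forall u v, tlift b (tmul u v) = b u v;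
  tlift_uniq : forall (W : lmodType k) (b : U -> V -> W) (g : tcar -> W),
    lin g -> (forall u v, g (tmul u v) = b u v) -> forall t, g t = tlift b t }.

Arguments tlift {U V} t0 {W}.

Record pushout (A B C : lmodType k) (f : A -> B) (g : A -> C) := Pushout {
  pcar : lmodType k;
  pl : B -> pcar;
  pr : C -> pcar;
  pl_lin : lin pl;
  pr_lin : lin pr;
  p_comm : forall a, pl (f a) = pr (g a);
  p_univ : forall (W : lmodType k) (u : B -> W) (v : C -> W),
    lin u -> lin v -> (forall a, u (f a) = v (g a)) ->
    exists! w : pcar -> W,
      lin w /\ (forall b, w (pl b) = u b) /\ (forall c, w (pr c) = v c) }.

Variable tn : forall U V : lmodType k, tensor U V.
Variable po : forall (A B C : lmodType k) (f : A -> B) (g : A -> C), pushout f g.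

Definition tens (U V : lmodType k) : lmodType k := tcar (tn U V).
Definition tm (U V : lmodType k) (u : U) (v : V) : tens U V := tmul (tn U V) u v.

Definition tmap (U U' V V' : lmodType k) (f : U -> U') (g : V -> V') :
  tens U V -> tens U' V' :=
  tlift (tn U V) (fun u v => tm (f u) (g v)).

Definition assoc (U V W : lmodType k) : tens (tens U V) W -> tens U (tens V W) :=
  tlift (tn (tens U V) W)
    (fun t w => tlift (tn U V) (fun u v => tm u (tm v w)) t).

Definition assoc_inv (U V W : lmodType k) : tens U (tens V W) -> tens (tens U V) W :=
  tlift (tn U (tens V W))
    (fun u t => tlift (tn V W) (fun v w => tm (tm u v) w) t).

Record coalgebra (H : lmodType k) := Coalgebra {
  cDelta : H -> tens H H;
  cEps : H -> k^o;
  cDelta_lin : lin cDelta;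
  cEps_lin : lin cEps;
  coassoc : forall h,
    assoc (tmap cDelta (@id H) (cDelta h)) = tmap (@id H) cDelta (cDelta h);
  counit_l : forall h, tmap cEps (@id H) (cDelta h) = tm (1 : k^o) h;
  counit_r : forall h, tmap (@id H) cEps (cDelta h) = tm h (1 : k^o) }.

Record pdatum (H X : lmodType k) := PDatum {
  dXH : lmodType k;
  dpi : tens X H -> dXH;
  drho : X -> dXH;
  dpi_lin : lin dpi;
  dpi_surj : forall z, exists t, dpi t = z;
  drho_lin : lin drho }.

Section Datum.
Variables (H : lmodType k) (C : coalgebra H) (X : lmodType k) (D : pdatum H X).

(* X.k : pushout of pi_X and X(x)eps ; legs X.eps, pi_{X,eps} *)
Definition po_Xk := po (dpi D) (tmap (@id X) (cEps C)).
(* (X.H).H : pushout of pi_X and rho_X(x)H ; legs rho_X.H, pi_{X.H} *)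
Definition po_XHH := po (dpi D) (tmap (drho D) (@id H)).
(* X.(H(x)H) : pushout of pi_X and X(x)Delta ; legs X.Delta, pi_{X,Delta} *)
Definition po_XHoH := po (dpi D) (tmap (@id X) (cDelta C)).
(* X.(H.H) : pushout of pi_{X,Delta} and pi_X(x)H (via X(x)(H(x)H) = (X(x)H)(x)H);
   legs pi'_X, pi'_{X,Delta} *)
Definition po_XHbH :=
  po (pr po_XHoH) (fun t => tmap (dpi D) (@id H) (assoc_inv t)).
(* Theta : pushout of pi_{X.H} and pi'_{X,Delta} ; legs theta_1, theta_2 *)
Definition po_Theta := po (pr po_XHH) (pr po_XHbH).

Definition quasi : Prop :=
  bijective (pr po_Xk) /\
  (forall x : X, pl po_Xk (drho D x) = pr po_Xk (tm x (1 : k^o))) /\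
  (forall x : X, pl po_Theta (pl po_XHH (drho D x))
                 = pr po_Theta (pl po_XHbH (pl po_XHoH (drho D x)))).

Definition lax : Prop :=
  exists theta : pcar po_XHbH -> pcar po_XHH,
    lin theta /\ forall t, theta (pr po_XHbH t) = pr po_XHH t.

Definition geometric : Prop :=
  exists theta : pcar po_XHbH -> pcar po_XHH,
    lin theta /\ (forall t, theta (pr po_XHbH t) = pr po_XHH t) /\ bijective theta.

End Datum.

Definition pmorph (H Y X : lmodType k) (DY : pdatum H Y) (DX : pdatum H X)
  (f : Y -> X) (fH : dXH DY -> dXH DX) : Prop :=
  lin f /\ lin fH /\
  (forall y, fH (drho DY y) = drho DX (f y)) /\
  (forall t, fH (dpi DY t) = dpi DX (tmap f (@id H) t)).

End PartialComodules.

Arguments pmorph {k tn H Y X} DY DX f fH.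

(* Main.v *)
Require Import Defs.
From HB Require Import structures.
From mathcomp Require Import all_boot all_order all_algebra.
From mathcomp Require Import boolp classical_sets.
Set Implicit Arguments.
Unset Strict Implicit.
Unset Printing Implicit Defensive.
Import GRing.Theory.
Local Open Scope ring_scope.

Section Zorn_ext.
Variable k : fieldType.
Variables (U W : lmodType k).

Definition closedS (S : U -> Prop) :=
  S 0 /\ forall a u v, S u -> S v -> S (a *: u + v).
Definition linon (S : U -> Prop) (g : U -> W) :=
  forall a u v, S u -> S v -> g (a *: u + v) = a *: g u + g v.

Record PL (V : U -> Prop) (phi : U -> W) := MkPL {
  plS : U -> Prop; plg : U -> W;
  plC : closedS plS; plL : linon plS plg;
  plV : forall u, V u -> plS u; plE : forall u, V u -> plg u = phi u }.
Arguments plL [V phi] p a [u v].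
Arguments plE [V phi] p [u].
Arguments plV [V phi] p [u].

Lemma closedS_add S : closedS S -> forall u v, S u -> S v -> S (u + v).
Proof. move=> [_ C] u v Su Sv; by have := C 1 u v Su Sv; rewrite scale1r. Qed.
Lemma closedS_scale S : closedS S -> forall a u, S u -> S (a *: u).
Proof. by move=> [S0 C] a u Su; have := C a u 0 Su S0; rewrite addr0. Qed.

Lemma linon0 S g : closedS S -> linon S g -> g 0 = 0.
Proof.
move=> [S0 _] L; have E := L 1 0 0 S0 S0; rewrite !scale1r addr0 in E.
by symmetry; apply: (addrI (g 0)); rewrite -E addr0.
Qed.

Lemma ext_lin (V : U -> Prop) (phi : U -> W) :
  closedS V -> linon V phi ->
  exists psi : U -> W, lin psi /\ forall u, V u -> psi u = phi u.
Proof.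
move=> CV LV.
pose t0 := @MkPL V phi V phi CV LV (fun u h => h) (fun u h => erefl).
pose R (p q : PL V phi) : bool :=
  `[< (forall u, plS p u -> plS q u) /\ (forall u, plS p u -> plg q u = plg p u) >].
have [m maxm] : exists m, premaximal (fun x y => R x y) m.
  apply: (@ZL_preorder _ t0 R).
  - by move=> p; apply/asboolP; split.
  - move=> p q r /asboolP[pq1 pq2] /asboolP[qr1 qr2]; apply/asboolP; split.
      by move=> u /pq1 /qr1.
    by move=> u Su; rewrite qr2 ?pq2 //; apply: pq1.
  move=> A totA.
  have [[p0 Ap0]|nA] := pselect (exists p, A p); last first.
    by exists t0 => s As; exfalso; apply: nA; exists s.
  pose S u := exists p, A p /\ plS p u.
  pose g u := match pselect (S u) with
              | left e => plg (projT1 (cid e)) u | right _ => 0 end.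
  have agree : forall p u, A p -> plS p u -> g u = plg p u.
    move=> p u Ap Spu; rewrite /g; case: pselect => [e|ne]; last first.
      by exfalso; apply: ne; exists p.
    case: (cid e) => q /= [Aq Squ].
    case: (totA p q Ap Aq) => /asboolP[h1 h2].
      by rewrite h2.
    by rewrite h2.
  have two : forall u v, S u -> S v -> exists p, A p /\ plS p u /\ plS p v.
    move=> u v [p [Ap Spu]] [q [Aq Sqv]].
    case: (totA p q Ap Aq) => /asboolP[h1 h2].
      by exists q; split=> //; split=> //; apply: h1.
    by exists p; split=> //; split=> //; apply: h1.
  have CS : closedS S.
    split; first by exists p0; split=> //; case: (plC p0).
    move=> a u v Su Sv; have [p [Ap [Spu Spv]]] := two u v Su Sv.
    by exists p; split=> //; case: (plC p) => _ CC; apply: CC.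
  have LS : linon S g.
    move=> a u v Su Sv; have [p [Ap [Spu Spv]]] := two u v Su Sv.
    have Sp := plC p.
    rewrite (agree p) //; last by case: Sp => _ CC; apply: CC.
    by rewrite (agree p u) // (agree p v) // plL.
  have VS : forall u, V u -> S u by move=> u Vu; exists p0; split=> //; apply: plV.
  have ES : forall u, V u -> g u = phi u.
    by move=> u Vu; rewrite (agree p0) ?plE //; apply: plV.
  exists (MkPL CS LS VS ES) => s As; apply/asboolP; split=> /=.
    by move=> u Su; exists s.
  by move=> u Su; rewrite (agree s).
exists (plg m); split; last by apply: plE.
suff allS : forall u, plS m u.
  by move=> a u v; apply: plL.
move=> u0; apply: contrapT => nS.
have CSm := plC m; have LSm := plL m.
pose S' z := exists s c, plS m s /\ z = s + c *: u0.
have uniq : forall s c s' c', plS m s -> plS m s' -> s + c *: u0 = s' + c' *: u0 ->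
    s = s' /\ c = c'.
  move=> s c s' c' Ss Ss' E.
  have Ec : c = c'.
    apply: contrapT => ne; apply: nS.
    have : (c - c') *: u0 = s' - s.
      rewrite scalerBl; have -> : c *: u0 = (s + c *: u0) - s by rewrite addrAC subrr add0r.
      by rewrite E addrAC addrK.
    move=> E2; have -> : u0 = (c - c')^-1 *: (s' - s).
      by rewrite -E2 scalerA mulVf ?scale1r // subr_eq0; apply/eqP.
    apply: closedS_scale => //; apply: closedS_add => //.
    by rewrite -scaleN1r; apply: closedS_scale.
  by subst c'; split=> //; move/addIr: E.
pose g' z := match pselect (S' z) with
             | left e => plg m (projT1 (cid e)) | right _ => 0 end.
have g'E : forall s c, plS m s -> g' (s + c *: u0) = plg m s.
  move=> s c Ss; rewrite /g'; case: pselect => [e|ne]; last first.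
    by exfalso; apply: ne; exists s, c.
  case: (cid e) => s' /= [c' [Ss' E]].
  by have [-> _] := uniq _ _ _ _ Ss' Ss (esym E).
have CS' : closedS S'.
  split; first by exists 0, 0; rewrite scale0r addr0; split=> //; case: CSm.
  move=> a u v [s [c [Ss ->]]] [s' [c' [Ss' ->]]].
  exists (a *: s + s'), (a * c + c'); split; first by case: CSm => _ CC; apply: CC.
  by rewrite scalerDr scalerDl scalerA addrACA.
have LS' : linon S' g'.
  move=> a u v [s [c [Ss ->]]] [s' [c' [Ss' ->]]].
  have -> : a *: (s + c *: u0) + (s' + c' *: u0) = (a *: s + s') + (a * c + c') *: u0.
    by rewrite scalerDr scalerDl scalerA addrACA.
  rewrite !g'E //; last by case: CSm => _ CC; apply: CC.
  by rewrite LSm.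
have VS' : forall u, V u -> S' u.
  by move=> u Vu; exists u, 0; rewrite scale0r addr0; split=> //; apply: plV.
have ES' : forall u, V u -> g' u = phi u.
  move=> u Vu; have := g'E u 0 (plV m Vu); rewrite scale0r addr0 => ->.
  by apply: plE.
have Rm : R m (MkPL CS' LS' VS' ES').
  apply/asboolP; split=> /=.
    by move=> u Su; exists u, 0; rewrite scale0r addr0.
  by move=> u Su; have := g'E u 0 Su; rewrite scale0r addr0.
have /asboolP [h1 _] := maxm _ Rm.
apply: nS; apply: h1 => /=; exists 0, 1; rewrite scale1r add0r; split=> //.
by case: CSm.
Qed.

End Zorn_ext.

Section Sep.
Variable k : fieldType.

Lemma lin_add (U V : lmodType k) (f : U -> V) : lin f -> forall u v, f (u + v) = f u + f v.
Proof. by move=> L u v; have := L 1 u v; rewrite !scale1r. Qed.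
Lemma lin0 (U V : lmodType k) (f : U -> V) : lin f -> f 0 = 0.
Proof.
move=> L; have E := L 1 0 0; rewrite !scale1r addr0 in E.
by symmetry; apply: (addrI (f 0)); rewrite -E addr0.
Qed.
Lemma linZ (U V : lmodType k) (f : U -> V) : lin f -> forall a u, f (a *: u) = a *: f u.
Proof. by move=> L a u; have := L a u 0; rewrite !addr0 (lin0 L) addr0. Qed.
Lemma linN (U V : lmodType k) (f : U -> V) : lin f -> forall u, f (- u) = - f u.
Proof. by move=> L u; rewrite -scaleN1r linZ // scaleN1r. Qed.
Lemma linB (U V : lmodType k) (f : U -> V) : lin f -> forall u v, f (u - v) = f u - f v.
Proof. by move=> L u v; rewrite lin_add // linN. Qed.
Lemma lin_sum (U V : lmodType k) (f : U -> V) : lin f ->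
  forall (I : Type) (r : seq I) (P : pred I) (F : I -> U),
  f (\sum_(i <- r | P i) F i) = \sum_(i <- r | P i) f (F i).
Proof.
move=> L I r P F; elim/big_rec2: _ => [|i y1 y2 _ <-]; first by rewrite lin0.
by rewrite lin_add.
Qed.
Lemma lin_comp (U V W : lmodType k) (f : U -> V) (g : V -> W) : lin f -> lin g -> lin (g \o f).
Proof. by move=> Lf Lg a u v /=; rewrite Lf Lg. Qed.
Lemma lin_id (U : lmodType k) : lin (@id U). Proof. by []. Qed.
Lemma lin_zero (U V : lmodType k) : lin (fun _ : U => (0 : V)).
Proof. by move=> a u v; rewrite scaler0 addr0. Qed.

Lemma closedS_sub (U : lmodType k) (S : U -> Prop) : closedS S -> forall u v, S u -> S v -> S (u - v).
Proof.
move=> C u v Su Sv; apply: closedS_add => //; rewrite -scaleN1r; exact: closedS_scale.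
Qed.

Lemma separate (U : lmodType k) (V : U -> Prop) (v : U) :
  closedS V -> ~ V v ->
  exists psi : U -> k^o, lin psi /\ (forall z, V z -> psi z = 0) /\ psi v = 1.
Proof.
move=> CV nV.
pose V' z := exists p : U * k, V p.1 /\ z = p.1 + p.2 *: v.
have uniq : forall s c s' c', V s -> V s' -> s + c *: v = s' + c' *: v -> c = c'.
  move=> s c s' c' Ss Ss' E; apply: contrapT => ne; apply: nV.
  have E2 : (c - c') *: v = s' - s.
    rewrite scalerBl; have -> : c *: v = (s + c *: v) - s by rewrite addrAC subrr add0r.
    by rewrite E addrAC addrK.
  have -> : v = (c - c')^-1 *: (s' - s).
    by rewrite -E2 scalerA mulVf ?scale1r // subr_eq0; apply/eqP.
  by apply: closedS_scale => //; apply: closedS_sub.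
pose phi z : k^o := match pselect (V' z) with
             | left e => (projT1 (cid e)).2 | right _ => 0 end.
have phiE : forall s c, V s -> phi (s + c *: v) = c.
  move=> s c Ss; rewrite /phi; case: pselect => [e|ne]; last first.
    by exfalso; apply: ne; exists (s, c).
  case: (cid e) => [[s' c']] /= [Ss' E].
  by apply: (uniq _ _ _ _ Ss' Ss (esym E)).
have CV' : closedS V'.
  split; first by exists (0, 0); rewrite scale0r addr0; split=> //; case: CV.
  move=> a u w [[s c] [/= Ss ->]] [[s' c'] [/= Ss' ->]].
  exists (a *: s + s', a * c + c'); split; first by case: CV => _ CC; apply: CC.
  by rewrite /= scalerDr scalerDl scalerA addrACA.
have LV' : linon V' phi.
  move=> a u w [[s c] [/= Ss ->]] [[s' c'] [/= Ss' ->]].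
  have -> : a *: (s + c *: v) + (s' + c' *: v) = (a *: s + s') + (a * c + c') *: v.
    by rewrite scalerDr scalerDl scalerA addrACA.
  by rewrite !phiE //; case: CV => _ CC; apply: CC.
have [psi [Lpsi Epsi]] := ext_lin CV' LV'.
exists psi; split=> //; split.
  move=> z Vz; rewrite Epsi; last by exists (z, 0); rewrite scale0r addr0.
  by have := phiE z 0 Vz; rewrite scale0r addr0.
rewrite Epsi; last by exists (0, 1); rewrite scale1r add0r; split=> //; case: CV.
by have := phiE 0 1 (proj1 CV); rewrite scale1r add0r.
Qed.

Lemma left_inv (A B : lmodType k) (g : A -> B) : lin g -> injective g ->
  exists h : B -> A, lin h /\ forall a, h (g a) = a.
Proof.
move=> Lg Ig.
pose V z := exists a, z = g a.
pose phi z := match pselect (V z) with left e => projT1 (cid e) | right _ => 0 end.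
have phiE : forall a, phi (g a) = a.
  move=> a; rewrite /phi; case: pselect => [e|ne]; last by exfalso; apply: ne; exists a.
  by case: (cid e) => a' /= /Ig.
have CV : closedS V.
  split; first by exists 0; rewrite lin0.
  by move=> c u w [a ->] [b ->]; exists (c *: a + b); rewrite Lg.
have LV : linon V phi.
  by move=> c u w [a ->] [b ->]; rewrite -Lg !phiE.
have [h [Lh Eh]] := ext_lin CV LV.
by exists h; split=> // a; rewrite Eh ?phiE //; exists a.
Qed.

End Sep.
Arguments lin_zero {k U V}.
Arguments lin_id {k U}.

Section Tens.
Variable k : fieldType.
Variable tn : forall U V : lmodType k, tensor U V.
Local Notation tm := (tm tn).
Local Notation tmap := (tmap (tn:=tn)).
Local Notation tens := (tens tn).
Local Notation tl U V := (@tlift _ U V (tn U V) _).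

Lemma tmlinl (U V : lmodType k) (v : V) : lin (fun u : U => tm u v).
Proof. exact: (proj1 (tmul_bilin (tn U V)) v). Qed.
Lemma tmlinr (U V : lmodType k) (u : U) : lin (fun v : V => tm u v).
Proof. exact: (proj2 (tmul_bilin (tn U V)) u). Qed.
Arguments tmlinl {U V} v.
Arguments tmlinr {U V} u.

Lemma tlift_tm (U V W : lmodType k) (b : U -> V -> W) : bilin b ->
  forall u v, tl U V b (tm u v) = b u v.
Proof. by move=> Bb u v; apply: tlift_tmul. Qed.
Lemma tlift_lin' (U V W : lmodType k) (b : U -> V -> W) : bilin b -> lin (tl U V b).
Proof. by move=> Bb; apply: tlift_lin. Qed.

Lemma text (U V W : lmodType k) (g1 g2 : tens U V -> W) : lin g1 -> lin g2 ->
  (forall u v, g1 (tm u v) = g2 (tm u v)) -> forall t, g1 t = g2 t.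
Proof.
move=> L1 L2 E t.
rewrite (tlift_uniq (b := fun u v => g1 (tm u v)) L1) //.
by rewrite (tlift_uniq (b := fun u v => g1 (tm u v)) L2).
Qed.

Lemma bilin_tmf (U U' V V' : lmodType k) (f : U -> U') (g : V -> V') :
  lin f -> lin g -> bilin (fun u v => tm (f u) (g v)).
Proof.
move=> Lf Lg; split=> [v|u] a x y /=; first by rewrite Lf tmlinl.
by rewrite Lg tmlinr.
Qed.

Lemma tmap_lin (U U' V V' : lmodType k) (f : U -> U') (g : V -> V') :
  lin f -> lin g -> lin (tmap f g).
Proof. by move=> Lf Lg; apply: tlift_lin; apply: bilin_tmf. Qed.

Lemma tmap_tm (U U' V V' : lmodType k) (f : U -> U') (g : V -> V') :
  lin f -> lin g -> forall u v, tmap f g (tm u v) = tm (f u) (g v).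
Proof. by move=> Lf Lg u v; rewrite /Defs.tmap tlift_tm //; apply: bilin_tmf. Qed.

Lemma tmap_comp (U U' U'' V V' V'' : lmodType k) (f : U -> U') (g : V -> V')
  (f' : U' -> U'') (g' : V' -> V'') :
  lin f -> lin g -> lin f' -> lin g' ->
  forall t, tmap f' g' (tmap f g t) = tmap (f' \o f) (g' \o g) t.
Proof.
move=> Lf Lg Lf' Lg'; apply: text.
- by apply: lin_comp; apply: tmap_lin.
- by apply: tmap_lin; apply: lin_comp.
by move=> u v; rewrite !tmap_tm //; apply: lin_comp.
Qed.

Lemma tmap_id (U V : lmodType k) t : tmap (@id U) (@id V) t = t.
Proof.
by apply: (text (g2 := id)) => //; [apply: tmap_lin | move=> u v; rewrite tmap_tm].
Qed.

Lemma tmap_ext (U U' V V' : lmodType k) (f f' : U -> U') (g g' : V -> V') :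
  (forall u, f u = f' u) -> (forall v, g v = g' v) -> forall t, tmap f g t = tmap f' g' t.
Proof.
move=> Ef Eg t; have -> : f = f' by apply: funext.
by have -> : g = g' by apply: funext.
Qed.

Lemma tm0l (U V : lmodType k) (v : V) : tm (0 : U) v = 0.
Proof. by have := lin0 (tmlinl (U:=U) v). Qed.
Lemma tm0r (U V : lmodType k) (u : U) : tm u (0 : V) = 0.
Proof. by have := lin0 (tmlinr (V:=V) u). Qed.

Lemma tspan (U V : lmodType k) (t : tens U V) :
  exists s : seq (U * V), t = \sum_(p <- s) tm p.1 p.2.
Proof.
pose S (t : tens U V) := exists s : seq (U * V), t = \sum_(p <- s) tm p.1 p.2.
have CS : closedS S.
  split; first by exists [::]; rewrite big_nil.
  move=> a u v [s ->] [s' ->]; exists ([seq (a *: p.1, p.2) | p <- s] ++ s').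
  rewrite big_cat big_map /= scaler_sumr; congr (_ + _).
  by apply: eq_bigr => p _; rewrite (linZ (tmlinl _)).
apply: contrapT => nS.
have [psi [Lp [Vp p1]]] := separate CS nS.
have E := @text _ _ _ psi (fun _ => 0) Lp lin_zero.
have : (1 : k) = 0.
  rewrite -p1; apply: E => u v; apply: Vp; exists [:: (u, v)]; by rewrite big_seq1.
by move/eqP; rewrite oner_eq0.
Qed.

Lemma ai_lin_inner (U V W : lmodType k) (u : U) :
  bilin (fun (v : V) (w : W) => tm (tm u v) w).
Proof.
split=> [w|v] a x y /=; first by rewrite (tmlinr u) (tmlinl w).
by rewrite tmlinr.
Qed.

Lemma assoc_inv_bilin (U V W : lmodType k) :
  bilin (fun (u : U) (t : tens V W) => tl V W (fun v w => tm (tm u v) w) t).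
Proof.
split=> [t|u] a x y /=; last by apply: tlift_lin; apply: ai_lin_inner.
pose g1 t := tl V W (fun v w => tm (tm (a *: x + y) v) w) t.
pose g2 t := a *: tl V W (fun v w => tm (tm x v) w) t +
             tl V W (fun v w => tm (tm y v) w) t.
apply: (@text _ _ _ g1 g2).
- by apply: tlift_lin; apply: ai_lin_inner.
- move=> c t1 t2; rewrite /g2 !(tlift_lin (ai_lin_inner _ _ _)).
  by rewrite !scalerDr !scalerA [a * c]mulrC addrACA.
move=> v w; rewrite /g1 /g2 !tlift_tm; try apply: ai_lin_inner.
by rewrite (tmlinl v) (tmlinl w).
Qed.

Lemma assoc_inv_lin (U V W : lmodType k) : lin (@assoc_inv _ tn U V W).
Proof. by apply: tlift_lin; apply: assoc_inv_bilin. Qed.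

Lemma assoc_inv_tm (U V W : lmodType k) (u : U) (v : V) (w : W) :
  assoc_inv (tm u (tm v w)) = tm (tm u v) w.
Proof.
rewrite /assoc_inv tlift_tm; last by apply: assoc_inv_bilin.
by rewrite tlift_tm //; apply: ai_lin_inner.
Qed.

End Tens.

Section Tens2.
Variable k : fieldType.
Variable tn : forall U V : lmodType k, tensor U V.
Local Notation tm := (tm tn).
Local Notation tmap := (tmap (tn:=tn)).
Local Notation tens := (tens tn).
Local Notation tl U V := (@tlift _ U V (tn U V) _).

Lemma ext2r (U V W Z : lmodType k) (g1 g2 : tens U (tens V W) -> Z) : lin g1 -> lin g2 ->
  (forall u v w, g1 (tm u (tm v w)) = g2 (tm u (tm v w))) -> forall t, g1 t = g2 t.
Proof.
move=> L1 L2 E; apply: text => // u t.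
apply: (@text _ _ _ _ _ (fun t => g1 (tm u t)) (fun t => g2 (tm u t))) => //.
- exact: (lin_comp (tmlinr tn u) L1).
- exact: (lin_comp (tmlinr tn u) L2).
Qed.

Lemma ext2l (U V W Z : lmodType k) (g1 g2 : tens (tens U V) W -> Z) : lin g1 -> lin g2 ->
  (forall u v w, g1 (tm (tm u v) w) = g2 (tm (tm u v) w)) -> forall t, g1 t = g2 t.
Proof.
move=> L1 L2 E; apply: text => // t w.
apply: (@text _ _ _ _ _ (fun t => g1 (tm t w)) (fun t => g2 (tm t w))) => //.
- exact: (lin_comp (tmlinl tn w) L1).
- exact: (lin_comp (tmlinl tn w) L2).
Qed.

Lemma a_lin_inner (U V W : lmodType k) (w : W) :
  bilin (fun (u : U) (v : V) => tm u (tm v w)).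
Proof.
split=> [v|u] a x y /=; first by rewrite (tmlinl tn).
by rewrite (tmlinl tn w) (tmlinr tn u).
Qed.

Lemma assoc_bilin (U V W : lmodType k) :
  bilin (fun (t : tens U V) (w : W) => tl U V (fun u v => tm u (tm v w)) t).
Proof.
split=> [w|t] a x y /=; first by apply: tlift_lin; apply: a_lin_inner.
pose g1 t := tl U V (fun u v => tm u (tm v (a *: x + y))) t.
pose g2 t := a *: tl U V (fun u v => tm u (tm v x)) t +
             tl U V (fun u v => tm u (tm v y)) t.
apply: (@text _ _ _ _ _ g1 g2).
- by apply: tlift_lin; apply: a_lin_inner.
- move=> c t1 t2; rewrite /g2 !(tlift_lin (a_lin_inner _ _ _)).
  by rewrite !scalerDr !scalerA [a * c]mulrC addrACA.
move=> u v; rewrite /g1 /g2 !tlift_tm; try apply: a_lin_inner.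
by rewrite (tmlinr tn v) (tmlinr tn u).
Qed.

Lemma assoc_lin (U V W : lmodType k) : lin (@assoc _ tn U V W).
Proof. by apply: tlift_lin; apply: assoc_bilin. Qed.

Lemma assoc_tm (U V W : lmodType k) (u : U) (v : V) (w : W) :
  assoc (tm (tm u v) w) = tm u (tm v w).
Proof.
rewrite /assoc tlift_tm; last by apply: assoc_bilin.
by rewrite tlift_tm //; apply: a_lin_inner.
Qed.

Lemma assoc_invK (U V W : lmodType k) (t : tens (tens U V) W) :
  assoc_inv (assoc t) = t.
Proof.
move: t.
apply: (ext2l (g1 := fun t : tens (tens U V) W => assoc_inv (assoc t)) (g2 := id)) => //.
- by move=> a x y /=; rewrite assoc_lin assoc_inv_lin.
by move=> u v w; rewrite assoc_tm assoc_inv_tm.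
Qed.

Lemma assoc_inv_nat (U U' V V' W W' : lmodType k) (f : U -> U') (g : V -> V') (h : W -> W') :
  lin f -> lin g -> lin h -> forall t,
  assoc_inv (tmap f (tmap g h) t) = tmap (tmap f g) h (assoc_inv t).
Proof.
move=> Lf Lg Lh.
apply: ext2r.
- by move=> a x y /=; rewrite (tmap_lin Lf (tmap_lin Lg Lh)) assoc_inv_lin.
- by move=> a x y /=; rewrite assoc_inv_lin (tmap_lin (tmap_lin Lf Lg) Lh).
move=> u v w /=.
rewrite !tmap_tm //; try exact: tmap_lin.
by rewrite assoc_inv_tm assoc_inv_tm tmap_tm ?tmap_tm //; exact: tmap_lin.
Qed.

End Tens2.

Section PO.
Variable k : fieldType.

Lemma pairE (B C : lmodType k) (x : k) (b1 b2 : B) (c1 c2 : C) :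
  x *: ((b1, c1) : (B * C)%type) + (b2, c2) = (x *: b1 + b2, x *: c1 + c2).
Proof. reflexivity. Qed.
Lemma pairD (B C : lmodType k) (b1 b2 : B) (c1 c2 : C) :
  ((b1, c1) : (B * C)%type) + (b2, c2) = (b1 + b2, c1 + c2).
Proof. reflexivity. Qed.

Lemma po_map (A B C W : lmodType k) (f : A -> B) (g : A -> C) (P : pushout f g)
  (u : B -> W) (v : C -> W) : lin u -> lin v -> (forall a, u (f a) = v (g a)) ->
  exists w : pcar P -> W, lin w /\ (forall b, w (pl P b) = u b) /\ (forall c, w (pr P c) = v c).
Proof. by move=> Lu Lv E; have [w [H _]] := p_univ P Lu Lv E; exists w. Qed.

Lemma po_eq (A B C : lmodType k) (f : A -> B) (g : A -> C) (P : pushout f g) :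
  lin f -> lin g -> forall b c, pl P b = pr P c -> exists a, b = f a /\ c = g a.
Proof.
move=> Lf Lg b c E.
pose S (z : (B * C)%type) := exists a, z = (f a, g a).
have CS : closedS S.
  split; first by exists 0; rewrite (lin0 Lf) (lin0 Lg).
  move=> x z1 z2 [a1 ->] [a2 ->]; exists (x *: a1 + a2).
  by rewrite Lf Lg.
apply: contrapT => nE.
have nS : ~ S (b, c) by move=> [a E0]; apply: nE; exists a; case: E0.
have [psi [Lp [Vp p1]]] := separate CS nS.
pose u (b : B) := psi (b, 0). pose v (c : C) := - psi (0, c).
have Lu : lin u.
  by move=> x y z; rewrite /u -Lp pairE scaler0 addr0.
have Lv : lin v.
  by move=> x y z; rewrite /v scalerN -opprD -Lp pairE scaler0 addr0.
have split2 : forall (b : B) (c : C), psi (b, c) = psi (b, 0) + psi (0, c).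
  by move=> b' c'; rewrite -(lin_add Lp) pairD addr0 add0r.
have [w [Lw [Ew1 Ew2]]] : exists w : pcar P -> k^o, lin w /\ (forall b, w (pl P b) = u b) /\ (forall c, w (pr P c) = v c).
  apply: po_map; [exact: Lu | exact: Lv | move=> a].
  rewrite /u /v; apply/eqP; rewrite -subr_eq0 opprK -split2 Vp //; by exists a.
have : u b = v c by rewrite -Ew1 -Ew2 E.
rewrite /u /v => /eqP; rewrite -subr_eq0 opprK -split2 p1.
by rewrite oner_eq0.
Qed.

Lemma po_span (A B C : lmodType k) (f : A -> B) (g : A -> C) (P : pushout f g) :
  forall z, exists b c, z = pl P b + pr P c.
Proof.
move=> z; apply: contrapT => nz.
pose S z := exists b c, z = pl P b + pr P c.
have CS : closedS S.
  split; first by exists 0, 0; rewrite (lin0 (pl_lin P)) (lin0 (pr_lin P)) addr0.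
  move=> x z1 z2 [b1 [c1 ->]] [b2 [c2 ->]]; exists (x *: b1 + b2), (x *: c1 + c2).
  rewrite (pl_lin P) (pr_lin P) scalerDr.
  by rewrite addrACA.
have [psi [Lp [Vp p1]]] := separate CS nz.
have [w [_ H]] := p_univ P (@lin_zero _ B k^o) (@lin_zero _ C k^o) (fun a => erefl).
have E1 : w = psi.
  apply: H; split; first exact: Lp.
  split=> [b'|c']; apply: Vp; [exists b', 0 | exists 0, c'].
    by rewrite (lin0 (pr_lin P)) addr0.
  by rewrite (lin0 (pl_lin P)) add0r.
have E2 : w = (fun _ => 0).
  by apply: H; split; [exact: lin_zero | split].
move: p1; rewrite -E1 E2 => /eqP; by rewrite eq_sym oner_eq0.
Qed.

Lemma factor (A B C : lmodType k) (p : A -> B) (q : A -> C) :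
  lin p -> lin q -> (forall b, exists a, p a = b) -> (forall a, p a = 0 -> q a = 0) ->
  exists w : B -> C, lin w /\ forall a, w (p a) = q a.
Proof.
move=> Lp Lq Sp K.
pose w b := q (projT1 (cid (Sp b))).
have wE : forall a, w (p a) = q a.
  move=> a; rewrite /w; case: cid => a' /= E.
  apply/eqP; rewrite -subr_eq0 -(linB Lq); apply/eqP/K.
  by rewrite (linB Lp) E subrr.
exists w; split=> // x b1 b2.
have [a1 <-] := Sp b1; have [a2 <-] := Sp b2.
by rewrite -Lp !wE Lq.
Qed.

End PO.

Section SubL.
Variables (k : fieldType) (U : lmodType k) (P : U -> Prop) (CP : closedS P).

Definition subP : {pred U} := fun u => let _ := CP in `[< P u >].

Lemma subP_closed : GRing.submod_closed subP.
Proof.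
split; first by apply/asboolP; case: CP.
by move=> a u v /asboolP Pu /asboolP Pv; apply/asboolP; case: CP => _ C; apply: C.
Qed.

HB.instance Definition _ := GRing.isSubmodClosed.Build k U subP subP_closed.

Record subT := SubT { sv : U; _ : sv \in subP }.
HB.instance Definition _ := [isSub for sv].
HB.instance Definition _ := [Choice of subT by <:].
HB.instance Definition _ := [SubChoice_isSubLmodule of subT by <:].

Lemma sv_lin : lin (sv : subT -> U).
Proof. by move=> a u v. Qed.

Lemma sv_inj : injective (sv : subT -> U).
Proof. exact: val_inj. Qed.

Lemma mem_subP u : P u -> u \in subP.
Proof. by move=> Pu; apply/asboolP. Qed.

Lemma subP_mem u : u \in subP -> P u.
Proof. by move/asboolP. Qed.

End SubL.


Section Contr.
Variable k : fieldType.
Variable tn : forall U V : lmodType k, tensor U V.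
Local Notation tm := (tm tn).
Local Notation tmap := (tmap (tn:=tn)).
Local Notation tens := (tens tn).
Local Notation tl U V := (@tlift _ U V (tn U V) _).

Definition contr (Z V : lmodType k) (g : V -> k^o) : tens Z V -> Z :=
  tl Z V (fun z v => g v *: z).

Lemma contr_bilin (Z V : lmodType k) (g : V -> k^o) : lin g -> bilin (fun (z : Z) v => g v *: z).
Proof.
move=> Lg; split=> [v|z] a x y /=; first by rewrite scalerDr !scalerA mulrC.
by rewrite Lg scalerDl scalerA.
Qed.

Lemma contr_lin (Z V : lmodType k) (g : V -> k^o) : lin g -> lin (contr (Z:=Z) g).
Proof. by move=> Lg; apply: tlift_lin; apply: contr_bilin. Qed.

Lemma contr_tm (Z V : lmodType k) (g : V -> k^o) : lin g -> forall z v,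
  contr (Z:=Z) g (tm z v) = g v *: z.
Proof. by move=> Lg z v; rewrite /contr tlift_tm //; apply: contr_bilin. Qed.

End Contr.
Arguments contr {k tn Z V} g.

Section XSide.
Variable k : fieldType.
Variable tn : forall U V : lmodType k, tensor U V.
Variable po : forall (A B C : lmodType k) (f : A -> B) (g : A -> C), pushout f g.
Variables (H : lmodType k) (C : coalgebra tn H) (X : lmodType k) (D : pdatum tn H X).
Hypothesis QD : quasi po C D.
Local Notation tm := (tm tn).
Local Notation tmap := (tmap (tn:=tn)).
Local Notation tens := (tens tn).
Local Notation tl U V := (@tlift _ U V (tn U V) _).

Local Notation XH := (dXH D).
Local Notation pi := (dpi D).
Local Notation rho := (drho D).
Local Notation eps := (cEps C).
Local Notation Delta := (cDelta C).

Definition alpha (t : tens X H) : tens XH H := tmap rho id t.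
Definition beta (t : tens X H) : tens XH H := tmap pi id (assoc_inv (tmap id Delta t)).

Lemma Lpi : lin pi. Proof. exact: dpi_lin. Qed.
Lemma Lrho : lin rho. Proof. exact: drho_lin. Qed.
Lemma Leps : lin eps. Proof. exact: cEps_lin. Qed.
Lemma LDelta : lin Delta. Proof. exact: cDelta_lin. Qed.

Lemma alpha_lin : lin alpha.
Proof. exact: (tmap_lin Lrho lin_id). Qed.
Lemma beta_lin : lin beta.
Proof.
move=> a u v; rewrite /beta (tmap_lin lin_id LDelta) assoc_inv_lin.
by rewrite (tmap_lin Lpi lin_id).
Qed.

Lemma Kinj : injective (pr (po_Xk po C D)).
Proof. by case: QD => [[g ? ?] _] ; apply: (can_inj (g := g)). Qed.

Lemma K_eps t : pi t = 0 -> tmap id eps t = 0.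
Proof.
move=> E; apply: Kinj; rewrite -(p_comm (po_Xk po C D)) /= E.
by rewrite (lin0 (pl_lin _)) (lin0 (pr_lin _)).
Qed.

Lemma lift_eps x t : pi t = rho x -> tmap id eps t = tm x (1 : k^o).
Proof.
move=> E; apply: Kinj; rewrite -(p_comm (po_Xk po C D)) /= E.
by case: QD => _ [-> _].
Qed.

Definition rr := contr (tn:=tn) (Z := X) (fun c : k^o => c).
Lemma rr_lin : lin rr. Proof. exact: contr_lin. Qed.
Lemma rr_tm1 x : rr (tm x (1 : k^o)) = x.
Proof. by rewrite /rr contr_tm // scale1r. Qed.

Lemma e_ex : exists e : XH -> X, lin e /\ forall t, e (pi t) = rr (tmap id eps t).
Proof.
apply: factor.
- exact: Lpi.
- by move=> a u v; rewrite (tmap_lin lin_id Leps) rr_lin.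
- by move=> z; apply: dpi_surj.
by move=> a /K_eps ->; rewrite (lin0 rr_lin).
Qed.

Definition ee : XH -> X := projT1 (cid e_ex).
Lemma ee_lin : lin ee. Proof. by rewrite /ee; case: cid => e [? ?]. Qed.
Lemma ee_pi t : ee (pi t) = rr (tmap id eps t).
Proof. exact: (proj2 (projT2 (cid e_ex)) t). Qed.
Lemma ee_rho x : ee (rho x) = x.
Proof.
have [t Et] := dpi_surj (rho x).
by rewrite -Et ee_pi (lift_eps Et) rr_tm1.
Qed.

Definition Phi : tens XH H -> tens X H := tmap ee id.
Lemma Phi_lin : lin Phi. Proof. exact: (tmap_lin ee_lin lin_id). Qed.

Lemma Phi_alpha t : Phi (alpha t) = t.
Proof.
rewrite /Phi /alpha tmap_comp //; [|exact: Lrho|exact: ee_lin].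
by rewrite (@tmap_ext _ _ _ _ _ _ _ id _ id) ?tmap_id // => x; rewrite /= ee_rho.
Qed.

Lemma Phi_beta t : Phi (beta t) = t.
Proof.
move: t; apply: (text (g1 := fun t => Phi (beta t)) (g2 := id)) => //.
  by move=> a u v; rewrite beta_lin Phi_lin.
move=> x h; rewrite /beta.
have Lsc : lin (fun c : k^o => c *: x) by move=> b c d; rewrite scalerDl scalerA.
pose G1 (w : tens H H) := Phi (tmap pi id (assoc_inv (tm x w))).
pose G2 (w : tens H H) := tmap (fun c : k^o => c *: x) id (tmap eps id w).
have LG2 : lin G2.
  by move=> a u v; rewrite /G2 (tmap_lin Leps lin_id) (tmap_lin Lsc lin_id).
have EG : forall w, G1 w = G2 w.
  apply: text => //.
    move=> a u v; rewrite /G1 (tmlinr tn x) assoc_inv_lin (tmap_lin Lpi lin_id).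
    by rewrite Phi_lin.
  move=> a b; rewrite /G1 /G2 assoc_inv_tm (tmap_tm tn Lpi lin_id) /Phi.
  rewrite (tmap_tm tn ee_lin lin_id) (tmap_tm tn Leps lin_id) (tmap_tm tn Lsc lin_id).
  by rewrite ee_pi (tmap_tm tn lin_id Leps) /rr contr_tm.
have -> : tmap id Delta (tm x h) = tm x (Delta h) by rewrite (tmap_tm tn lin_id LDelta).
rewrite -/(G1 (Delta h)) EG /G2 (counit_l C) (tmap_tm tn Lsc lin_id).
by rewrite scale1r.
Qed.

End XSide.
Arguments Lpi {k tn H X D}.
Arguments Lrho {k tn H X D}.
Arguments Leps {k tn H C}.
Arguments LDelta {k tn H C}.
Arguments alpha_lin {k tn H X D}.
Arguments beta_lin {k tn H C X D}.

Section XSide.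
Variable k : fieldType.
Variable tn : forall U V : lmodType k, tensor U V.
Variable po : forall (A B C : lmodType k) (f : A -> B) (g : A -> C), pushout f g.
Variables (H : lmodType k) (C : coalgebra tn H) (X : lmodType k) (D : pdatum tn H X).
Hypothesis QD : quasi po C D.
Local Notation tm := (tm tn).
Local Notation tmap := (tmap (tn:=tn)).
Local Notation tens := (tens tn).
Local Notation tl U V := (@tlift _ U V (tn U V) _).

Local Notation XH := (dXH D).
Local Notation pi := (dpi D).
Local Notation rho := (drho D).
Local Notation eps := (cEps C).
Local Notation Delta := (cDelta C).
Local Notation alpha := (alpha D).
Local Notation beta := (beta C D).

Lemma extract x : exists s, pi s = rho x /\ alpha s = beta s.
Proof.
have [t0 Et0] := dpi_surj (rho x).
have [_ [_ Th]] := QD.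
have := Th x.
move/(po_eq (pr_lin _) (pr_lin _)) => [c [Ec1 Ec2]].
have E1 : pl (po_XHH po D) 0 = pr (po_XHH po D) (alpha t0 - c).
  rewrite (lin0 (pl_lin _)) (linB (pr_lin _)) -/(alpha t0).
  by rewrite -(p_comm (po_XHH po D)) Et0 Ec1 subrr.
have [a [Ea1 Ea2]] := po_eq Lpi (tmap_lin Lrho lin_id) E1.
have E2 : pl (po_XHbH po C D) 0 = pr (po_XHbH po C D) (beta t0 - c).
  rewrite (lin0 (pl_lin _)) (linB (pr_lin _)) -Ec2 -Et0.
  rewrite (p_comm (po_XHoH po C D)) (p_comm (po_XHbH po C D)) subrr //.
have Lg : lin (fun t : tens X (tens H H) => tmap pi id (assoc_inv t)).
  by move=> b u v; rewrite assoc_inv_lin (tmap_lin Lpi lin_id).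
have [w [Ew1 Ew2]] := po_eq (pr_lin _) Lg E2.
move: Ew1; rewrite -(lin0 (pl_lin (po_XHoH po C D))) => Ew1.
have [b [Eb1 Eb2]] := po_eq Lpi (tmap_lin lin_id LDelta) Ew1.
have Ec : c = alpha (t0 - a).
  rewrite (linB alpha_lin); rewrite /alpha in Ea2 *.
  by rewrite -Ea2 opprB addrC subrK.
have Ec' : c = beta (t0 - b).
  rewrite (linB beta_lin) {2}/beta -Eb2 -Ew2.
  by rewrite opprB addrC subrK.
have Eab : t0 - a = t0 - b.
  by rewrite -(Phi_alpha QD (t0 - a)) -Ec Ec' Phi_beta.
exists (t0 - a); split.
  by rewrite (linB Lpi) -Ea1 subr0.
by rewrite -Ec Ec' Eab.
Qed.

Lemma lax_crit : lax po C D -> forall t, pi t = 0 -> alpha t = beta t.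
Proof.
move=> [th [Lth Eth]] t Pt.
have E : pl (po_XHH po D) 0 = pr (po_XHH po D) (beta t).
  rewrite -Eth /beta -(p_comm (po_XHbH po C D)) -(p_comm (po_XHoH po C D)) Pt.
  by rewrite !(lin0 (pl_lin _)) (lin0 Lth).
have [a [Ea1 Ea2]] := po_eq Lpi (tmap_lin Lrho lin_id) E.
have Eat : a = t by rewrite -(Phi_alpha QD a) -(Phi_beta QD t) Ea2.
by rewrite /alpha -Eat -Ea2 Eat.
Qed.

End XSide.

Lemma po_pr_surj (k : fieldType) (A B C : lmodType k) (f : A -> B) (g : A -> C) (P : pushout f g) :
  (forall b, exists a, f a = b) -> forall z, exists c, z = pr P c.
Proof.
move=> Sf z; have [b [c ->]] := po_span z.
have [a <-] := Sf b; exists (g a + c); by rewrite p_comm (lin_add (pr_lin P)).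
Qed.

Lemma inj_surj_bij (A B : Type) (f : A -> B) :
  injective f -> (forall b, exists a, b = f a) -> bijective f.
Proof.
move=> If Sf; pose g b := projT1 (cid (Sf b)).
have fg : cancel g f by move=> b; rewrite /g; case: cid => a /= ->.
by exists g => // a; apply: If; rewrite fg.
Qed.


Section Geo.
Variable k : fieldType.
Variable tn : forall U V : lmodType k, tensor U V.
Variable po : forall (A B C : lmodType k) (f : A -> B) (g : A -> C), pushout f g.
Variables (H : lmodType k) (C : coalgebra tn H) (X : lmodType k) (D : pdatum tn H X).
Local Notation tm := (tm tn).
Local Notation tmap := (tmap (tn:=tn)).
Local Notation tens := (tens tn).
Local Notation tl U V := (@tlift _ U V (tn U V) _).

Local Notation XH := (dXH D).
Local Notation pi := (dpi D).
Local Notation rho := (drho D).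
Local Notation eps := (cEps C).
Local Notation Delta := (cDelta C).
Local Notation alpha := (alpha D).
Local Notation beta := (beta C D).

Lemma crit_geom : (forall t, pi t = 0 -> alpha t = beta t) -> geometric po C D.
Proof.
move=> Cr.
have Lpb : lin (fun t => pr (po_XHH po D) (beta t)).
  by move=> a u v; rewrite beta_lin (pr_lin _).
have K1 : forall t, pi t = 0 -> pr (po_XHH po D) (beta t) = 0.
  move=> t Pt; rewrite -Cr // /alpha -(p_comm (po_XHH po D)) Pt.
  exact: (lin0 (pl_lin _)).
have [u1 [Lu1 Eu1]] := factor Lpi Lpb (@dpi_surj _ _ _ _ D) K1.
have Lv1 : lin (fun w : tens X (tens H H) => pr (po_XHH po D) (tmap pi id (assoc_inv w))).
  by move=> a u v; rewrite assoc_inv_lin (tmap_lin Lpi lin_id) (pr_lin _).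
have K2 : forall t, u1 (pi t) = pr (po_XHH po D) (tmap pi id (assoc_inv (tmap id Delta t))).
  by move=> t; rewrite Eu1.
have [u [Lu [Eu1' Eu2']]] := po_map (po_XHoH po C D) Lu1 Lv1 K2.
have K3 : forall w, u (pr (po_XHoH po C D) w) = pr (po_XHH po D) (tmap pi id (assoc_inv w)).
  by move=> w; rewrite Eu2'.
have [th [Lth [Eth1 Eth2]]] := po_map (po_XHbH po C D) Lu (pr_lin (po_XHH po D)) K3.
exists th; split=> //; split=> //.
have Spr : forall z, exists c, z = pr (po_XHbH po C D) c.
  move=> z; have [y [c ->]] := po_span z.
  have [w ->] : exists w, y = pr (po_XHoH po C D) w.
    apply: po_pr_surj => b; exact: dpi_surj.
  exists ((fun w => tmap pi id (assoc_inv w)) w + c).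
  by rewrite (p_comm (po_XHbH po C D)) (lin_add (pr_lin _)).
apply: inj_surj_bij.
  move=> z1 z2; have [c1 ->] := Spr z1; have [c2 ->] := Spr z2.
  rewrite !Eth2 => E.
  have E' : pl (po_XHH po D) 0 = pr (po_XHH po D) (c1 - c2).
    by rewrite (lin0 (pl_lin _)) (linB (pr_lin _)) E subrr.
  have [a [Ea1 Ea2]] := po_eq Lpi (tmap_lin Lrho lin_id) E'.
  apply/eqP; rewrite -subr_eq0 -(linB (pr_lin _)) Ea2 -/(alpha a) Cr //.
  rewrite /beta -(p_comm (po_XHbH po C D)) -(p_comm (po_XHoH po C D)) -Ea1.
  by rewrite !(lin0 (pl_lin _)).
move=> z; have [c ->] : exists c, z = pr (po_XHH po D) c.
  apply: po_pr_surj => b; exact: dpi_surj.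
by exists (pr (po_XHbH po C D) c); rewrite Eth2.
Qed.

End Geo.

Section Red.
Variable k : fieldType.

Definition free (V : lmodType k) n (h : 'I_n -> V) :=
  forall c : 'I_n -> k, \sum_i c i *: h i = 0 -> forall i, c i = 0.

Lemma reduce (U V T : lmodType k) (b : U -> V -> T) : bilin b ->
  forall m (x : 'I_m.+1 -> U) (h : 'I_m.+1 -> V) (c : 'I_m.+1 -> k) j,
  c j != 0 -> \sum_i c i *: x i = 0 ->
  exists (x' : 'I_m -> U) (h' : 'I_m -> V),
    \sum_i b (x i) (h i) = \sum_i b (x' i) (h' i).
Proof.
move=> [Bl Br] m x h c j cj0 Ec.
rewrite (bigD1_ord j) //= in Ec.
exists (fun i => x (lift j i)), (fun i => h (lift j i) - (c (lift j i) / c j) *: h j).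
rewrite (bigD1_ord j) //=.
have Exj : x j = - (c j)^-1 *: \sum_(i < m) c (lift j i) *: x (lift j i).
  have -> : \sum_(i < m) c (lift j i) *: x (lift j i) = - (c j *: x j).
    by apply/eqP; rewrite -addr_eq0 addrC Ec.
  by rewrite scaleNr scalerN opprK scalerA mulVf // scale1r.
have E1 : b (x j) (h j) = - \sum_(i < m) (c (lift j i) / c j) *: b (x (lift j i)) (h j).
  rewrite Exj scaleNr (linN (Bl (h j))) (linZ (Bl (h j))) (lin_sum (Bl (h j))).
  rewrite scaler_sumr; congr (- _); apply: eq_bigr => i _.
  by rewrite (linZ (Bl (h j))) scalerA mulrC.
rewrite E1 -sumrN -big_split /=; apply: eq_bigr => i _.
by rewrite (linB (Br _)) (linZ (Br _)) addrC.
Qed.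

End Red.

Section Min.
Variable k : fieldType.
Variable tn : forall U V : lmodType k, tensor U V.
Local Notation tm := (tm tn).
Local Notation tens := (tens tn).

Lemma not_free (V : lmodType k) n (h : 'I_n -> V) : ~ free h ->
  exists c : 'I_n -> k, \sum_i c i *: h i = 0 /\ exists i, c i != 0.
Proof.
move=> nf; apply: contrapT => H; apply: nf => c Hc i; apply: contrapT => ci.
by apply: H; exists c; split=> //; exists i; apply/eqP.
Qed.

Lemma minrep (U V : lmodType k) (t : tens U V) :
  exists n (x : 'I_n -> U) (h : 'I_n -> V),
    t = \sum_i tm (x i) (h i) /\ free x /\ free h.
Proof.
pose P n := exists (x : 'I_n -> U) (h : 'I_n -> V), t = \sum_i tm (x i) (h i).
have exP : exists n, `[< P n >].
  have [s Es] := tspan t; exists (size s); apply/asboolP.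
  exists (fun i => (nth (0, 0) s i).1), (fun i => (nth (0, 0) s i).2).
  by rewrite Es (big_nth (0, 0)) big_mkord.
case: (ex_minnP exP) => n /asboolP [x [h Et]] minn.
exists n, x, h; split=> //.
have Bt : bilin (fun (u : U) (v : V) => tm u v).
  by split=> [v|u]; [exact: tmlinl | exact: tmlinr].
have Bt' : bilin (fun (v : V) (u : U) => tm u v).
  by split=> [u|v]; [exact: tmlinr | exact: tmlinl].
case: n x h Et minn => [|m] x h Et minn.
  by split=> c _ [].
split; apply: contrapT => /not_free [c [Hc [i ci]]].
- have [x' [h' E]] := @reduce _ _ _ _ _ Bt m x h c i ci Hc.
  have : (m.+1 <= m)%N by apply: minn; apply/asboolP; exists x', h'; rewrite Et E.
  by rewrite ltnn.
- have [h' [x' E]] := @reduce _ _ _ _ _ Bt' m h x c i ci Hc.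
  have : (m.+1 <= m)%N by apply: minn; apply/asboolP; exists x', h'; rewrite Et E.
  by rewrite ltnn.
Qed.


Lemma sum_delta (V : lmodType k) n (h : 'I_n -> V) i :
  \sum_j (i == j)%:R *: h j = h i.
Proof.
rewrite (bigD1 i) //= eqxx scale1r big1 ?addr0 // => j ji.
by rewrite eq_sym (negbTE ji) scale0r.
Qed.

Lemma dual_ex (V : lmodType k) n (h : 'I_n -> V) : free h -> forall i,
  exists g : V -> k^o, lin g /\ forall j, g (h j) = (i == j)%:R.
Proof.
move=> Fh i.
pose S z := exists c : 'I_n -> k, c i = 0 /\ z = \sum_j c j *: h j.
have CS : closedS S.
  split; first by exists (fun _ => 0); split=> //; rewrite big1 // => j _; rewrite scale0r.
  move=> a u v [c [ci ->]] [d [di ->]]; exists (fun j => a * c j + d j); split.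
    by rewrite ci di mulr0 addr0.
  rewrite scaler_sumr -big_split /=; apply: eq_bigr => j _.
  by rewrite scalerDl scalerA.
have nS : ~ S (h i).
  move=> [c [ci Ehi]].
  have Hs : \sum_j (c j - (i == j)%:R) *: h j = 0.
    rewrite (eq_bigr (fun j => c j *: h j - (i == j)%:R *: h j)); last first.
      by move=> j _; rewrite scalerBl.
    by rewrite sumrB sum_delta -Ehi subrr.
  have := Fh _ Hs i.
  by rewrite ci eqxx sub0r => /eqP; rewrite oppr_eq0 oner_eq0.
have [g [Lg [Sg gi]]] := separate CS nS.
exists g; split=> // j; case: (eqVneq i j) => [<-|ij]; first by rewrite gi.
rewrite Sg //; exists (fun l => (j == l)%:R); split; first by rewrite eq_sym (negbTE ij).
by rewrite sum_delta.
Qed.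

End Min.

Section Coal.
Variable k : fieldType.
Variable tn : forall U V : lmodType k, tensor U V.
Variable po : forall (A B C : lmodType k) (f : A -> B) (g : A -> C), pushout f g.
Variables (H : lmodType k) (C : coalgebra tn H) (X : lmodType k) (D : pdatum tn H X).
Local Notation tm := (tm tn).
Local Notation tmap := (tmap (tn:=tn)).
Local Notation tens := (tens tn).
Local Notation tl U V := (@tlift _ U V (tn U V) _).

Local Notation XH := (dXH D).
Local Notation pi := (dpi D).
Local Notation rho := (drho D).
Local Notation eps := (cEps C).
Local Notation Delta := (cDelta C).
Local Notation alpha := (alpha D).
Local Notation beta := (beta C D).

Definition cg (g : H -> k^o) : tens H H -> H := contr (tn:=tn) (Z:=H) g.
Definition cD (g : H -> k^o) (h : H) : H := cg g (Delta h).

Lemma cg_lin g : lin g -> lin (cg g). Proof. by move=> Lg; apply: contr_lin. Qed.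
Lemma cD_lin g : lin g -> lin (cD g).
Proof. by move=> Lg a u v; rewrite /cD LDelta (cg_lin Lg). Qed.

Lemma tmapZ_lin (Z : lmodType k) (c : Z -> k^o) (x : X) : lin c -> lin (fun z => c z *: x).
Proof. by move=> Lc a u v; rewrite Lc scalerDl scalerA. Qed.

Lemma contr_beta g : lin g -> forall t,
  contr (tn:=tn) (Z:=XH) g (beta t) = pi (tmap id (cD g) t).
Proof.
move=> Lg; apply: text.
- by move=> a u v; rewrite beta_lin (contr_lin Lg).
- by move=> a u v; rewrite (tmap_lin lin_id (cD_lin Lg)) Lpi.
move=> x h; rewrite /beta (tmap_tm tn lin_id LDelta) (tmap_tm tn lin_id (cD_lin Lg)) /cD.
move: (Delta h); apply: text.
- move=> a u v; rewrite (tmlinr tn x) assoc_inv_lin (tmap_lin Lpi lin_id).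
  by rewrite (contr_lin Lg).
- by move=> a u v; rewrite (cg_lin Lg) (tmlinr tn x) Lpi.
move=> a b; rewrite assoc_inv_tm (tmap_tm tn Lpi lin_id) (contr_tm tn Lg).
by rewrite /cg (contr_tm tn Lg) (linZ (tmlinr tn x)) (linZ Lpi).
Qed.

Lemma alpha_cD g : lin g -> forall t, alpha (tmap id (cD g) t) = tmap id (cD g) (alpha t).
Proof.
move=> Lg t; rewrite /alpha !tmap_comp //; try exact: Lrho; try exact: (cD_lin Lg).
Qed.

Lemma cg_Delta g : lin g -> forall w : tens H H,
  Delta (cg g w) = contr (tn:=tn) (Z:=tens H H) g (tmap Delta id w).
Proof.
move=> Lg; apply: text.
- by move=> a u v; rewrite (cg_lin Lg) LDelta.
- by move=> a u v; rewrite (tmap_lin LDelta lin_id) (contr_lin Lg).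
move=> a b; rewrite (tmap_tm tn LDelta lin_id) /cg !(contr_tm tn Lg).
by rewrite (linZ LDelta).
Qed.

Lemma beta_cD g : lin g -> forall t, beta (tmap id (cD g) t) = tmap id (cD g) (beta t).
Proof.
move=> Lg; apply: text.
- by move=> a u v; rewrite (tmap_lin lin_id (cD_lin Lg)) beta_lin.
- by move=> a u v; rewrite beta_lin (tmap_lin lin_id (cD_lin Lg)).
move=> x h; rewrite (tmap_tm tn lin_id (cD_lin Lg)) /beta !(tmap_tm tn lin_id LDelta).
rewrite {1}/cD (cg_Delta Lg) -(assoc_invK (tmap Delta id (Delta h))) (coassoc C).
move: (Delta h); apply: text.
- move=> a u v; rewrite (tmap_lin lin_id LDelta) assoc_inv_lin (contr_lin Lg).
  by rewrite (tmlinr tn x) assoc_inv_lin (tmap_lin Lpi lin_id).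
- move=> a u v; rewrite (tmlinr tn x) assoc_inv_lin (tmap_lin Lpi lin_id).
  by rewrite (tmap_lin lin_id (cD_lin Lg)).
move=> a b; rewrite (tmap_tm tn lin_id LDelta) assoc_inv_tm (tmap_tm tn Lpi lin_id).
rewrite (tmap_tm tn lin_id (cD_lin Lg)).
have -> : contr (tn:=tn) (Z:=tens H H) g (assoc_inv (tm a (Delta b))) = tm a (cD g b).
  rewrite /cD; move: (Delta b); apply: text.
  - by move=> c u v; rewrite (tmlinr tn a) assoc_inv_lin (contr_lin Lg).
  - by move=> c u v; rewrite (cg_lin Lg) (tmlinr tn a).
  move=> b1 b2; rewrite assoc_inv_tm !(contr_tm tn Lg) /cg (contr_tm tn Lg).
  by rewrite (linZ (tmlinr tn a)).
by rewrite assoc_inv_tm (tmap_tm tn Lpi lin_id).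
Qed.

End Coal.

Section YSide.
Variable k : fieldType.
Variable tn : forall U V : lmodType k, tensor U V.
Variable po : forall (A B C : lmodType k) (f : A -> B) (g : A -> C), pushout f g.
Variables (H : lmodType k) (C : coalgebra tn H) (X : lmodType k) (D : pdatum tn H X).
Hypothesis QD : quasi po C D.
Local Notation tm := (tm tn).
Local Notation tmap := (tmap (tn:=tn)).
Local Notation tens := (tens tn).
Local Notation tl U V := (@tlift _ U V (tn U V) _).

Local Notation XH := (dXH D).
Local Notation pi := (dpi D).
Local Notation rho := (drho D).
Local Notation eps := (cEps C).
Local Notation Delta := (cDelta C).
Variables (n : nat) (xs : 'I_n -> X) (hs : 'I_n -> H) (g : 'I_n -> H -> k^o).
Hypothesis Fx : free xs.
Hypothesis Lg : forall i, lin (g i).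
Hypothesis Eg : forall i j, g i (hs j) = (i == j)%:R.
Let ss := \sum_i tm (xs i) (hs i).
Hypothesis Hs2 : alpha D ss = beta C D ss.

Local Notation Y := 'rV[k]_n.

Definition fY (y : Y) : X := \sum_i y 0 i *: xs i.

Lemma fY_lin : lin fY.
Proof.
move=> a y z; rewrite /fY scaler_sumr -big_split /=; apply: eq_bigr => i _.
by rewrite !mxE scalerDl scalerA.
Qed.

Lemma fY_inj : injective fY.
Proof.
move=> y z E; apply/rowP => i; apply/eqP; rewrite -subr_eq0; apply/eqP.
have := Fx (c := fun i => y 0 i - z 0 i) _ i; apply.
rewrite (eq_bigr (fun i => y 0 i *: xs i - z 0 i *: xs i)); last by move=> j _; rewrite scalerBl.
by rewrite sumrB -/(fY y) -/(fY z) E subrr.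
Qed.

Lemma fY_delta j : fY (delta_mx 0 j) = xs j.
Proof.
rewrite /fY -(sum_delta xs j); apply: eq_bigr => i _.
by rewrite mxE eqxx /= eq_sym.
Qed.

Definition uu i : tens Y H := \sum_j tm (delta_mx 0 j : Y) (cD C (g i) (hs j)).
Definition LY (y : Y) : tens Y H := \sum_i y 0 i *: uu i.

Lemma LY_lin : lin LY.
Proof.
move=> a y z; rewrite /LY scaler_sumr -big_split /=; apply: eq_bigr => i _.
by rewrite !mxE scalerDl scalerA.
Qed.

Lemma fmap_lin : lin (tmap fY (@id H)).
Proof. exact: (tmap_lin fY_lin lin_id). Qed.

Lemma f_uu i : tmap fY id (uu i) = tmap id (cD C (g i)) ss.
Proof.
rewrite /uu /ss (lin_sum fmap_lin) (lin_sum (tmap_lin lin_id (cD_lin C (Lg i)))).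
apply: eq_bigr => j _; rewrite (tmap_tm tn fY_lin lin_id) fY_delta.
by rewrite (tmap_tm tn lin_id (cD_lin C (Lg i))).
Qed.

Lemma f_LY y : tmap fY id (LY y) = \sum_i y 0 i *: tmap id (cD C (g i)) ss.
Proof.
rewrite /LY (lin_sum fmap_lin); apply: eq_bigr => i _.
by rewrite (linZ fmap_lin) f_uu.
Qed.

Lemma pi_si i : pi (tmap id (cD C (g i)) ss) = rho (xs i).
Proof.
rewrite -(contr_beta C D (Lg i)) -Hs2 /alpha /ss (lin_sum (tmap_lin Lrho lin_id)).
rewrite (lin_sum (contr_lin (Lg i))) -(sum_delta (fun j => rho (xs j)) i).
apply: eq_bigr => j _; rewrite (tmap_tm tn Lrho lin_id) (contr_tm tn (Lg i)).
by rewrite Eg.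
Qed.

Lemma F3 y : rho (fY y) = pi (tmap fY id (LY y)).
Proof.
rewrite f_LY (lin_sum Lpi) /fY (lin_sum Lrho); apply: eq_bigr => i _.
by rewrite (linZ Lpi) (linZ Lrho) pi_si.
Qed.

Lemma F4 y : alpha D (tmap fY id (LY y)) = beta C D (tmap fY id (LY y)).
Proof.
rewrite f_LY (lin_sum alpha_lin) (lin_sum beta_lin); apply: eq_bigr => i _.
by rewrite (linZ alpha_lin) (linZ beta_lin) (alpha_cD C D (Lg i)) (beta_cD C D (Lg i)) Hs2.
Qed.


Definition SP (z : XH) := exists t : tens Y H, z = pi (tmap fY id t).
Lemma CS : closedS SP.
Proof.
split; first by exists 0; rewrite (lin0 fmap_lin) (lin0 Lpi).
by move=> a u v [t ->] [t' ->]; exists (a *: t + t'); rewrite fmap_lin Lpi.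
Qed.

Definition YH : lmodType k := subT CS.
Definition dpiE (t : tens Y H) : YH := SubT (mem_subP CS (ex_intro _ t erefl)).
Lemma sv_dpiE t : sv (dpiE t) = pi (tmap fY id t). Proof. by []. Qed.
Lemma dpiE_lin : lin dpiE.
Proof.
move=> a u v; apply: sv_inj; rewrite (@sv_lin _ _ _ CS) !sv_dpiE.
by rewrite fmap_lin Lpi.
Qed.
Lemma dpiE_surj : forall z : YH, exists t, dpiE t = z.
Proof.
move=> [z zP]; have [t Et] := subP_mem zP; exists t; apply: sv_inj.
by rewrite sv_dpiE.
Qed.
Definition drhoE (y : Y) : YH := dpiE (LY y).
Lemma drhoE_lin : lin drhoE.
Proof. by move=> a u v; rewrite /drhoE LY_lin dpiE_lin. Qed.
Lemma sv_drhoE y : sv (drhoE y) = rho (fY y).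
Proof. by rewrite /drhoE sv_dpiE F3. Qed.

Definition svE (z : YH) : XH := sv z.

Definition EE : pdatum tn H Y := @PDatum k tn H Y YH dpiE drhoE dpiE_lin dpiE_surj drhoE_lin.

Lemma transfer t : alpha D (tmap fY id t) = beta C D (tmap fY id t) ->
  alpha EE t = beta C EE t.
Proof.
move=> E.
have Lsv : lin svE by exact: (@sv_lin _ _ _ CS).
have [hv [Lhv Ehv]] := left_inv Lsv (@sv_inj _ _ _ CS).
have inj : forall z1 z2 : tens YH H, tmap svE id z1 = tmap svE id z2 -> z1 = z2.
  have key : forall z : tens YH H, tmap hv id (tmap svE id z) = z.
    move=> z; etransitivity; first exact: (tmap_comp Lsv lin_id Lhv lin_id z).
    rewrite -{2}(tmap_id z); by apply: tmap_ext.
  by move=> z1 z2 Ez; rewrite -(key z1) -(key z2) Ez.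
apply: inj.
have Ea : tmap svE id (alpha EE t) = alpha D (tmap fY id t).
  rewrite /alpha /= (tmap_comp drhoE_lin lin_id Lsv lin_id).
  rewrite (tmap_comp fY_lin lin_id Lrho lin_id).
  by apply: tmap_ext => // y; exact: sv_drhoE.
have Eb : tmap svE id (beta C EE t) = beta C D (tmap fY id t).
  rewrite /beta /= (tmap_comp dpiE_lin lin_id Lsv lin_id).
  set A := assoc_inv _.
  have -> : tmap (svE \o dpiE) id A = tmap (pi \o tmap fY id) id A by apply: tmap_ext.
  rewrite -(tmap_comp fmap_lin lin_id Lpi lin_id) /A.
  rewrite -(assoc_inv_nat fY_lin lin_id lin_id).
  congr (tmap pi id (assoc_inv _)).
  rewrite (tmap_comp lin_id LDelta fY_lin (tmap_lin lin_id lin_id)).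
  rewrite (tmap_comp fY_lin lin_id lin_id LDelta).
  by apply: tmap_ext => // h; rewrite /= tmap_id.
by rewrite Ea Eb.
Qed.


Lemma tm_rr (Z : lmodType k) (t : tens Z k^o) : t = tm (contr (tn:=tn) (fun c : k^o => c) t) (1 : k^o).
Proof.
move: t; apply: text => //.
  by move=> a u v; rewrite (contr_lin lin_id) (tmlinl tn).
move=> z c; rewrite (contr_tm tn lin_id) (linZ (tmlinl tn _)).
by rewrite -(linZ (tmlinr tn z)) /GRing.scale /= mulr1.
Qed.

Lemma contr_fY (t : tens Y k^o) :
  contr (tn:=tn) (fun c : k^o => c) (tmap fY id t) = fY (contr (tn:=tn) (fun c : k^o => c) t).
Proof.
move: t; apply: text.
- by move=> a u v; rewrite (tmap_lin fY_lin lin_id) (contr_lin lin_id).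
- by move=> a u v; rewrite (contr_lin lin_id) fY_lin.
move=> y c; rewrite (tmap_tm tn fY_lin lin_id) !(contr_tm tn lin_id).
by rewrite (linZ fY_lin).
Qed.

Lemma fmapk_inj : injective (tmap fY (@id k^o)).
Proof.
move=> t1 t2 E; rewrite (tm_rr t1) (tm_rr t2); congr (tm _ _).
by apply: fY_inj; rewrite -!contr_fY E.
Qed.

Lemma comm_eps (t : tens Y H) : tmap fY id (tmap id eps t) = tmap id eps (tmap fY id t).
Proof.
rewrite (tmap_comp lin_id Leps fY_lin lin_id) (tmap_comp fY_lin lin_id lin_id Leps).
by apply: tmap_ext.
Qed.

Lemma K_epsE t : dpiE t = 0 -> tmap id eps t = 0.
Proof.
move=> E; apply: fmapk_inj; rewrite comm_eps (K_eps QD).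
  by rewrite (lin0 (tmap_lin fY_lin lin_id)).
by rewrite -sv_dpiE E.
Qed.

Lemma quasiE : quasi po C EE.
Proof.
split; last split.
- apply: inj_surj_bij; last first.
    apply: po_pr_surj => b; exact: dpiE_surj.
  have [u [Lu Eu]] := factor dpiE_lin (tmap_lin lin_id Leps) dpiE_surj K_epsE.
  have [w [_ [_ Ew]]] := po_map (po_Xk po C EE) Lu lin_id Eu.
  by move=> c1 c2 E; rewrite -(Ew c1) -(Ew c2) E.
- move=> y; rewrite /= /drhoE (p_comm (po_Xk po C EE)) /=; congr (pr _ _).
  apply: fmapk_inj; rewrite comm_eps (lift_eps QD (x := fY y)); last by rewrite -F3.
  by rewrite (tmap_tm tn fY_lin lin_id).
move=> y; rewrite /= /drhoE.
rewrite (p_comm (po_XHH po EE)) (p_comm (po_Theta po C EE)) (p_comm (po_XHoH po C EE)).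
rewrite (p_comm (po_XHbH po C EE)); congr (pr _ (pr _ _)).
exact: (transfer (F4 y)).
Qed.

Lemma pmorphE : pmorph EE D fY svE.
Proof.
split; first exact: fY_lin.
split; first exact: (@sv_lin _ _ _ CS).
by split=> [y|t]; [exact: sv_drhoE | exact: sv_dpiE].
Qed.

Lemma critE : lax po C D -> forall t, dpi EE t = 0 -> alpha EE t = beta C EE t.
Proof.
move=> LD t Et; apply: transfer; apply: (lax_crit QD LD).
have E0 : dpiE t = 0 := Et.
by rewrite -sv_dpiE E0.
Qed.

End YSide.

Unset Implicit Arguments.
Set Strict Implicit.


Theorem mainTheorem9
  (k : fieldType)
  (tn : forall U V : lmodType k, tensor U V)
  (po : forall (A B C : lmodType k) (f : A -> B) (g : A -> C), pushout f g)
  (H : lmodType k) (C : coalgebra tn H)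
  (X : lmodType k) (D : pdatum tn H X) :
  quasi po C D ->
  forall x : X,
  exists (Y : vectType k) (E : pdatum tn H Y) (f : Y -> X) (fH : dXH E -> dXH D),
    [/\ quasi po C E, pmorph E D f fH, injective f, injective fH
      & exists y : Y, f y = x] /\
    (lax po C D -> lax po C E) /\
    (geometric po C D -> geometric po C E).
Proof.
move=> QD x.
have [s [Es1 Es2]] := extract QD x.
have [n [xs [hs [Es [Fx Fh]]]]] := minrep s.
pose g i := projT1 (cid (dual_ex Fh i)).
have Lg : forall i, lin (g i) by move=> i; rewrite /g; case: cid => ? [].
have Eg : forall i j, g i (hs j) = (i == j)%:R by move=> i j; rewrite /g; case: cid => ? [].
have Hs2 : alpha D (\sum_i tm tn (xs i) (hs i)) = beta C D (\sum_i tm tn (xs i) (hs i)).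
  by rewrite -Es.
exists ('rV[k]_n : vectType k), (EE C D xs hs g), (fY xs), (@svE _ _ _ _ D n xs).
split; last split.
- split.
  + exact: (quasiE QD Fx Lg Eg Hs2).
  + exact: (pmorphE Lg Eg Hs2).
  + exact: (fY_inj Fx).
  + exact: sv_inj.
  + exists (\row_i (cEps C (hs i) : k)).
    rewrite /fY (eq_bigr (fun i => rr (tn := tn) (tm tn (xs i) (cEps C (hs i))))); last first.
      by move=> i _; rewrite mxE /rr (contr_tm tn lin_id).
    rewrite -(lin_sum (@rr_lin _ _ _)).
    have -> : \sum_i tm tn (xs i) (cEps C (hs i)) = tmap id (cEps C) s.
      rewrite Es (lin_sum (tmap_lin lin_id Leps)); apply: eq_bigr => i _.
      by rewrite (tmap_tm tn lin_id Leps).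
    by rewrite (lift_eps QD Es1) rr_tm1.
- move=> LD; have [th [Lth [Eth _]]] := crit_geom po (critE QD Lg Eg Hs2 LD).
  by exists th.
move=> [th [Lth [Eth _]]].
have LD : lax po C D by exists th.
have [th' [Lth' [Eth' _]]] := crit_geom po (critE QD Lg Eg Hs2 LD).
exact: (crit_geom po (critE QD Lg Eg Hs2 LD)).
Qed.
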